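(* Let $\Bbbk=\mathbb Z$ or $\mathbb Q$. Let $x,y,z$ be a basis of $H^2(BT^3;\mathbb Z)$ and let $\tilde\Gamma$ be the $3$-valent unsigned GKM graph with $T^3$-labeling on the complete bipartite graph with vertices $1,\dots,6$ and edges $16,25,34$ labeled $x$, edges $12,36,45$ labeled $y$, and edges $14,23,56$ labeled $z$ (with the connection mapping, along each edge, the edge with a given label to the edge with the same label). Let $\Gamma$ be the unsigned GKM graph of the $T^2$-action on the flag manifold $\mathrm{SU}(3)/T^2$ by left multiplication, and let $p\colon H^2(BT^3;\mathbb Z)\to H^2(BT^2;\mathbb Z)$ be an epimorphism such that $\tilde\Gamma$ extends $\Gamma$ (same graph and connection, $p\circ\alpha_{\tilde\Gamma}=\alpha_\Gamma$ modulo signs). Then $H^*_{T^3}(\tilde\Gamma;\Bbbk)$ is not a free $H^*(BT^3;\Bbbk)$-module, and the induced map $p_*\colon H^*_{T^3}(\tilde\Gamma;\Bbbk)\to H^*_{T^2}(\Gamma;\Bbbk)$, $f\mapsto p\circ f$, is not surjective.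
   Context: For a graph with axial function $\alpha$ (values in $H^2(BT;\mathbb Z)/\{\pm1\}$), the equivariant graph cohomology is $H^*_T(\Gamma;\Bbbk)=\{f\colon V\to H^*(BT;\Bbbk)\mid f(t(e))-f(i(e))\in(\alpha(e))\ \forall e\}$, a module over the polynomial ring $H^*(BT;\Bbbk)$. The GKM graph of $\mathrm{SU}(3)/T^2$ has the six $T^2$-fixed points as vertices, forms a complete bipartite graph $K_{3,3}$, and its labels at every vertex are the three positive roots of $\mathrm{SU}(3)$ modulo sign; such an epimorphism $p$ exists (sending $x,y,z$ to the three positive roots suitably). *)

(* Defs.v *)
From HB Require Import structures.
From mathcomp Require Import all_boot all_order all_algebra all_fingroup.
From mathcomp Require Import mpoly.
Set Implicit Arguments. Unset Strict Implicit. Unset Printing Implicit Defensive.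
Import GRing.Theory.
Local Open Scope ring_scope.

Definition dvdr (A : comNzRingType) (a b : A) : Prop := exists q : A, b = q * a.

Definition fscale (V : finType) (A : comNzRingType) (c : A) (f : {ffun V -> A})
  : {ffun V -> A} := [ffun v => c * f v].

Definition free_submodule (V : finType) (A : comNzRingType)
  (M : {ffun V -> A} -> Prop) : Prop :=
  exists B : {ffun V -> A} -> Prop,
    (forall b, B b -> M b) /\
    (forall f, M f -> exists (s : seq {ffun V -> A}) (c : {ffun V -> A} -> A),
        (forall b, b \in s -> B b) /\ f = \sum_(b <- s) fscale (c b) b) /\
    (forall (s : seq {ffun V -> A}) (c : {ffun V -> A} -> A),
        uniq s -> (forall b, b \in s -> B b) ->
        \sum_(b <- s) fscale (c b) b = 0 -> forall b, b \in s -> c b = 0).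

(* vertex n (1 <= n <= 6) *)
Definition vtx (n : nat) : 'I_6 := inord n.-1.
(* edges (a, b, l): label l = 0 means x, 1 means y, 2 means z *)
Definition tG_edges : seq (nat * nat * nat) :=
  [:: (1,6,0); (2,5,0); (3,4,0);
      (1,2,1); (3,6,1); (4,5,1);
      (1,4,2); (2,3,2); (5,6,2)]%N.
Definition lab (l : nat) : 'I_3 := inord l.

(* H^*(BT^3;R) = R[x,y,z] = {mpoly R[3]} with x,y,z = 'X_0,'X_1,'X_2.
   Equivariant graph cohomology H^*_{T^3}(Gamma~; R). *)
Definition H_tilde (R : comNzRingType) (f : {ffun 'I_6 -> {mpoly R[3]}}) : Prop :=
  forall e, e \in tG_edges ->
    dvdr ('X_(lab e.2) : {mpoly R[3]}) (f (vtx e.1.2) - f (vtx e.1.1)).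

(* H^2(BT^2;Z) = Z^2 with basis the simple roots alpha_1 = e_1 - e_2,
   alpha_2 = e_2 - e_3.  c i is the coordinate vector of e_i modulo (1,1,1),
   normalised so that e_i - e_j = c i - c j in the root basis. *)
Definition cvec (i : 'I_3) : 'cV[int]_2 :=
  \col_(k < 2) (if (i == 0 :> nat) then 1
                else if (i == 1 :> nat) then (k == 1 :> nat)%:Z else 0).
Definition root (i j : 'I_3) : 'cV[int]_2 := cvec i - cvec j.

(* A weight in Z^2 viewed as a degree-2 polynomial in H^*(BT^2;R) = R[u,v]. *)
Definition wpoly (R : comNzRingType) (w : 'cV[int]_2) : {mpoly R[2]} :=
  \sum_(k < 2) (w k 0)%:~R *: 'X_k.

(* Vertices: Weyl group S_3 = {perm 'I_3}.  Edges: w --- s_(e_i - e_j) w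
   (the transposition of i,j composed after w), labelled e_i - e_j. *)
Definition Gedge (w w' : {perm 'I_3}) (i j : 'I_3) : Prop :=
  i != j /\ forall x, w' x = tperm i j (w x).

Definition H_Gamma (R : comNzRingType) (g : {ffun {perm 'I_3} -> {mpoly R[2]}}) : Prop :=
  forall (w w' : {perm 'I_3}) (i j : 'I_3), Gedge w w' i j ->
    dvdr (wpoly R (root i j)) (g w' - g w).

(* p is given by its integer matrix P (column j = p of the j-th basis vector). *)
Definition epi (P : 'M[int]_(2,3)) : Prop :=
  forall w : 'cV[int]_2, exists v : 'cV[int]_3, P *m v = w.

Definition extends (P : 'M[int]_(2,3)) (phi : 'I_6 -> {perm 'I_3}) : Prop :=
  bijective phi /\
  forall e, e \in tG_edges ->
    exists i j : 'I_3, Gedge (phi (vtx e.1.1)) (phi (vtx e.1.2)) i j /\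
      (col (lab e.2) P = root i j \/ col (lab e.2) P = - root i j).

Definition ppoly (R : comNzRingType) (P : 'M[int]_(2,3)) (q : {mpoly R[3]}) : {mpoly R[2]} :=
  comp_mpoly [tuple wpoly R (col j P) | j < 3] q.

Definition pstar_surjective (R : comNzRingType) (P : 'M[int]_(2,3))
  (phi : 'I_6 -> {perm 'I_3}) : Prop :=
  forall g, @H_Gamma R g ->
    exists f, @H_tilde R f /\ forall v : 'I_6, g (phi v) = ppoly P (f v).

Definition conclusion (R : comNzRingType) (P : 'M[int]_(2,3))
  (phi : 'I_6 -> {perm 'I_3}) : Prop :=
  ~ free_submodule (@H_tilde R) /\ ~ pstar_surjective R P phi.

(* Main.v *)
Require Import Defs.
From HB Require Import structures.
From mathcomp Require Import all_boot all_order all_algebra all_fingroup.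
From mathcomp Require Import mpoly.
From mathcomp Require Import ring.
Set Implicit Arguments. Unset Strict Implicit. Unset Printing Implicit Defensive.
Import GRing.Theory.
Local Open Scope ring_scope.

Section Lin.
Variables (R : comNzRingType) (n : nat).
Implicit Types (p q : {mpoly R[n]}).

Definition ev0 p : R := p.@[fun _ => 0].
Definition lin (i : 'I_n) p : R := ev0 (mderiv i p).

Lemma ev0D p q : ev0 (p + q) = ev0 p + ev0 q. Proof. exact: mevalD. Qed.
Lemma ev0B p q : ev0 (p - q) = ev0 p - ev0 q. Proof. exact: mevalB. Qed.
Lemma ev0M p q : ev0 (p * q) = ev0 p * ev0 q. Proof. exact: mevalM. Qed.
Lemma ev0Z c p : ev0 (c *: p) = c * ev0 p. Proof. exact: mevalZ. Qed.
Lemma ev0C c : ev0 c%:MP = c. Proof. exact: mevalC. Qed.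
Lemma ev01 : ev0 1 = 1. Proof. exact: meval1. Qed.
Lemma ev0X i : ev0 'X_i = 0. Proof. by rewrite /ev0 mevalXU. Qed.

Lemma linD i p q : lin i (p + q) = lin i p + lin i q.
Proof. by rewrite /lin mderivD ev0D. Qed.
Lemma linB i p q : lin i (p - q) = lin i p - lin i q.
Proof. by rewrite /lin mderivB ev0B. Qed.
Lemma linZ i c p : lin i (c *: p) = c * lin i p.
Proof. by rewrite /lin mderivZ ev0Z. Qed.
Lemma lin0 i : lin i 0 = 0.
Proof. by rewrite /lin mderiv0 /ev0 meval0. Qed.
Lemma linC i c : lin i c%:MP = 0.
Proof. by rewrite /lin mderivC /ev0 meval0. Qed.
Lemma lin1 i : lin i 1 = 0.
Proof. by rewrite -mpolyC1 linC. Qed.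
Lemma linM i p q : lin i (p * q) = lin i p * ev0 q + ev0 p * lin i q.
Proof. by rewrite /lin mderivM ev0D !ev0M. Qed.

Lemma dX i j : mderiv j ('X_i : {mpoly R[n]}) = ((i == j)%:R)%:MP.
Proof.
rewrite mderivX mnm1E; case: eqP => [->|_].
  by rewrite (_ : (U_(j) - U_(j))%MM = 0%MM) ?mpolyX0 ?scale1r //;
     apply/mnmP => k; rewrite mnmBE subnn mnm0E.
by rewrite scale0r.
Qed.

Lemma linX i j : lin j ('X_i : {mpoly R[n]}) = (i == j)%:R.
Proof. by rewrite /lin dX ev0C. Qed.
End Lin.

Section Chain.
Variables (R : comNzRingType) (n k : nat) (lq : n.-tuple {mpoly R[k]}).
Hypothesis lq0 : forall j, ev0 (tnth lq j) = 0.

Lemma ev0_comp (p : {mpoly R[n]}) : ev0 (p \mPo lq) = ev0 p.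
Proof. by rewrite /ev0 comp_mpoly_meval; apply: meval_eq => j; exact: lq0. Qed.

Definition chainP (p : {mpoly R[n]}) := forall i,
  lin i (p \mPo lq) = \sum_j lin j p * lin i (tnth lq j).

Lemma chainD p q : chainP p -> chainP q -> chainP (p + q).
Proof.
move=> hp hq i; rewrite comp_mpolyD linD hp hq -big_split /=.
by apply: eq_bigr => j _; rewrite linD mulrDl.
Qed.

Lemma chainZ c p : chainP p -> chainP (c *: p).
Proof.
move=> hp i; rewrite comp_mpolyZ linZ hp mulr_sumr.
by apply: eq_bigr => j _; rewrite linZ mulrA.
Qed.

Lemma chainM p q : chainP p -> chainP q -> chainP (p * q).
Proof.
move=> hp hq i; rewrite rmorphM /= linM hp hq !ev0_comp mulr_suml mulr_sumr -big_split /=.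
apply: eq_bigr => j _; rewrite linM mulrDl; congr (_ + _).
  by rewrite mulrAC.
by rewrite mulrA.
Qed.

Lemma chain1 : chainP 1.
Proof.
by move=> i; rewrite rmorph1 lin1 big1 // => j _; rewrite lin1 mul0r.
Qed.

Lemma chainX j : chainP 'X_j.
Proof.
move=> i; rewrite comp_mpolyXU -tnth_nth (bigD1 j) //= linX eqxx mul1r big1 ?addr0 //.
by move=> l /negbTE; rewrite linX eq_sym => ->; rewrite mul0r.
Qed.

Lemma chain_all p : chainP p.
Proof.
elim/mpolyind: p => [|c m p _ _ hp].
  by move=> i; rewrite comp_mpoly0 lin0 big1 // => j _; rewrite lin0 mul0r.
apply: chainD => //; apply: chainZ.
rewrite mpolyXE_id; apply: (big_ind chainP) => //; first exact: chain1.
  exact: chainM.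
move=> j _; elim: (m j) => [|e ihe]; first by rewrite expr0; exact: chain1.
by rewrite exprS; apply: chainM => //; exact: chainX.
Qed.
End Chain.

Section Part2.
Variable R : comNzRingType.

Lemma lin_sum n i (I : Type) (r : seq I) (Pr : pred I) (F : I -> {mpoly R[n]}) :
  lin i (\sum_(j <- r | Pr j) F j) = \sum_(j <- r | Pr j) lin i (F j).
Proof. exact: (big_morph (@lin R n i) (@linD R n i) (@lin0 R n i)). Qed.

Lemma ev0_sum n (I : Type) (r : seq I) (Pr : pred I) (F : I -> {mpoly R[n]}) :
  ev0 (\sum_(j <- r | Pr j) F j) = \sum_(j <- r | Pr j) ev0 (F j).
Proof. exact: (big_morph (@ev0 R n) (@ev0D R n) (meval0 _)). Qed.

Lemma lin_wpoly w k : lin k (wpoly R w) = (w k 0)%:~R.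
Proof.
rewrite /wpoly lin_sum (bigD1 k) //= linZ linX eqxx mulr1 big1 ?addr0 //.
by move=> j /negbTE hj; rewrite linZ linX hj mulr0.
Qed.

Lemma ev0_wpoly w : ev0 (wpoly R w) = 0.
Proof.
by rewrite /wpoly ev0_sum big1 // => j _; rewrite ev0Z ev0X mulr0.
Qed.

Lemma wpolyB a b : wpoly R (a - b) = wpoly R a - wpoly R b.
Proof.
rewrite /wpoly -sumrB; apply: eq_bigr => k _.
by rewrite !mxE intrB scalerBl.
Qed.

Lemma edge_lin (f : {ffun 'I_6 -> {mpoly R[3]}}) : H_tilde f ->
  forall a b l, (a, b, l) \in tG_edges -> forall i, i != lab l ->
  lin i (f (vtx b)) = lin i (f (vtx a)).
Proof.
move=> Hf a b l he i hi; have [q Hq] := Hf _ he.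
apply/eqP; rewrite -subr_eq0 -linB /= Hq linM linX ev0X mulr0 add0r.
by rewrite (negbTE (introN eqP (fun e => (negP hi) (introT eqP (esym e))))) mulr0.
Qed.

Lemma ne_lab (i : 'I_3) (l : nat) : (l < 3)%N -> (val i != l) -> i != lab l.
Proof. by move=> hl h; apply: contra h => /eqP ->; rewrite /lab /= inordK. Qed.

Lemma vtxK (v : 'I_6) : v = vtx v.+1.
Proof. by rewrite /vtx /= inord_val. Qed.

Lemma lin_const (f : {ffun 'I_6 -> {mpoly R[3]}}) : H_tilde f ->
  forall i v, lin i (f v) = lin i (f (vtx 1)).
Proof.
move=> Hf i v; have E := edge_lin Hf.
have T : forall a b l, (a, b, l) \in tG_edges -> i != lab l ->
  lin i (f (vtx b)) = lin i (f (vtx a)) by move=> a b l h; exact: E.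
have Ts : forall a b l, (a, b, l) \in tG_edges -> i != lab l ->
  lin i (f (vtx a)) = lin i (f (vtx b)) by move=> a b l h h'; rewrite (T a b l).
rewrite (vtxK v).
case: i T Ts => [[|[|[|?]]] hi] // T Ts.
- have h2 := T 1%N 2%N 1%N isT ltac:(by apply: ne_lab).
  have h3 : lin (Ordinal hi) (f (vtx 3)) = lin (Ordinal hi) (f (vtx 1)).
    by rewrite (T 2%N 3%N 2%N isT ltac:(by apply: ne_lab)).
  have h4 := T 1%N 4%N 2%N isT ltac:(by apply: ne_lab).
  have h6 : lin (Ordinal hi) (f (vtx 6)) = lin (Ordinal hi) (f (vtx 1)).
    by rewrite (T 3%N 6%N 1%N isT ltac:(by apply: ne_lab)).
  have h5 : lin (Ordinal hi) (f (vtx 5)) = lin (Ordinal hi) (f (vtx 1)).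
    by rewrite (T 4%N 5%N 1%N isT ltac:(by apply: ne_lab)).
  by case: v => [[|[|[|[|[|[|?]]]]]] hv].
- have h6 := T 1%N 6%N 0%N isT ltac:(by apply: ne_lab).
  have h4 := T 1%N 4%N 2%N isT ltac:(by apply: ne_lab).
  have h3 : lin (Ordinal hi) (f (vtx 3)) = lin (Ordinal hi) (f (vtx 1)).
    by rewrite (Ts 3%N 4%N 0%N isT ltac:(by apply: ne_lab)).
  have h2 : lin (Ordinal hi) (f (vtx 2)) = lin (Ordinal hi) (f (vtx 1)).
    by rewrite (Ts 2%N 3%N 2%N isT ltac:(by apply: ne_lab)).
  have h5 : lin (Ordinal hi) (f (vtx 5)) = lin (Ordinal hi) (f (vtx 1)).
    by rewrite (T 2%N 5%N 0%N isT ltac:(by apply: ne_lab)).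
  by case: v => [[|[|[|[|[|[|?]]]]]] hv].
- have h2 := T 1%N 2%N 1%N isT ltac:(by apply: ne_lab).
  have h6 := T 1%N 6%N 0%N isT ltac:(by apply: ne_lab).
  have h5 : lin (Ordinal hi) (f (vtx 5)) = lin (Ordinal hi) (f (vtx 1)).
    by rewrite (T 2%N 5%N 0%N isT ltac:(by apply: ne_lab)).
  have h3 : lin (Ordinal hi) (f (vtx 3)) = lin (Ordinal hi) (f (vtx 1)).
    by rewrite (Ts 3%N 6%N 1%N isT ltac:(by apply: ne_lab)).
  have h4 : lin (Ordinal hi) (f (vtx 4)) = lin (Ordinal hi) (f (vtx 1)).
    by rewrite (T 3%N 4%N 0%N isT ltac:(by apply: ne_lab)).
  by case: v => [[|[|[|[|[|[|?]]]]]] hv].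
Qed.
End Part2.

Section Part2b.
Variable R : comNzRingType.

Definition gW : {ffun {perm 'I_3} -> {mpoly R[2]}} :=
  [ffun w : {perm 'I_3} => wpoly R (cvec (w 0))].

Lemma gW_H : H_Gamma gW.
Proof.
move=> w w' i j [neq Hw']; rewrite !ffunE Hw'.
case: tpermP => [->|->|_ _].
- by exists (-1); rewrite /root wpolyB mulN1r opprB.
- by exists 1; rewrite mul1r /root wpolyB.
- by exists 0; rewrite subrr mul0r.
Qed.

Lemma not_surj P phi : bijective phi -> ~ pstar_surjective R P phi.
Proof.
move=> [psi phiK psiK] Hs.
have [f [Hf Hfg]] := Hs gW gW_H.
have key : forall v k, ((cvec (phi v 0)) k 0)%:~R =
   \sum_j lin j (f (vtx 1)) * lin k (wpoly R (col j P)) :> R.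
  move=> v k; have := congr1 (lin k) (Hfg v).
  rewrite ffunE lin_wpoly => ->; rewrite /ppoly chain_all.
    by apply: eq_bigr => j _; rewrite (lin_const Hf) tnth_mktuple.
  by move=> j; rewrite tnth_mktuple ev0_wpoly.
have k1 := key (psi 1%g) 0; have k2 := key (psi (tperm 0 2)) 0.
rewrite !psiK in k1 k2; rewrite -k2 perm1 tpermL !mxE /= in k1.
by move/eqP: k1; rewrite oner_eq0.
Qed.
End Part2b.

Lemma forall_edges (Pe : nat -> nat -> nat -> Prop) :
  Pe 1 6 0 -> Pe 2 5 0 -> Pe 3 4 0 ->
  Pe 1 2 1 -> Pe 3 6 1 -> Pe 4 5 1 ->
  Pe 1 4 2 -> Pe 2 3 2 -> Pe 5 6 2 ->
  forall a b l, (a, b, l) \in tG_edges -> Pe a b l.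
Proof.
move=> h1 h2 h3 h4 h5 h6 h7 h8 h9 a b l; rewrite !inE.
by do ![case/orP=> [/eqP [-> -> ->]//|]]; move/eqP=> [-> -> ->].
Qed.

Lemma vtxE k : (0 < k <= 6)%N -> val (vtx k) = k.-1.
Proof. case/andP=> h1 h2; rewrite /vtx /= inordK //; by case: k h1 h2. Qed.

Lemma labE0 : lab 0 = 0. Proof. by apply: val_inj; rewrite /lab /= inordK. Qed.
Lemma labE1 : lab 1 = 1. Proof. by apply: val_inj; rewrite /lab /= inordK. Qed.
Lemma labE2 : lab 2 = 2. Proof. by apply: val_inj; rewrite /lab /= inordK. Qed.

Section Part1a.
Variable R : comNzRingType.
Local Notation M := (@H_tilde R).

Lemma ind_in_M (S : pred 'I_6) (c : {mpoly R[3]}) :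
  (forall a b l, (a, b, l) \in tG_edges -> (vtx a \in S) != (vtx b \in S) ->
     dvdr ('X_(lab l)) c) ->
  M [ffun v => if v \in S then c else 0].
Proof.
move=> h [[a b] l] he /=; rewrite !ffunE.
have := h a b l he.
case: (vtx a \in S); case: (vtx b \in S) => hh.
- by exists 0; rewrite subrr mul0r.
- by have [q ->] := hh isT; exists (- q); rewrite sub0r mulNr.
- by have [q ->] := hh isT; exists q; rewrite subr0.
- by exists 0; rewrite subrr mul0r.
Qed.

Definition mm : {ffun 'I_6 -> {mpoly R[3]}} :=
  [ffun v => if v \in [pred v : 'I_6 | (val v < 4)%N] then 'X_0 * 'X_1 else 0].
Definition aa : {ffun 'I_6 -> {mpoly R[3]}} :=
  [ffun v => if v \in [pred v : 'I_6 | (val v == 2)%N || (val v == 3)%N] then 'X_1 * 'X_2 else 0].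
Definition bb : {ffun 'I_6 -> {mpoly R[3]}} :=
  [ffun v => if v \in [pred v : 'I_6 | (val v < 2)%N] then 'X_0 * 'X_2 else 0].

Lemma mm_M : M mm.
Proof.
apply: ind_in_M; apply: (@forall_edges (fun a b l => _ -> _)); rewrite !inE !vtxE //= ?labE0 ?labE1 ?labE2 => // _.
- by exists 'X_1; rewrite mulrC.
- by exists 'X_1; rewrite mulrC.
- by exists 'X_0.
- by exists 'X_0.
Qed.

Lemma aa_M : M aa.
Proof.
apply: ind_in_M; apply: (@forall_edges (fun a b l => _ -> _)); rewrite !inE !vtxE //= ?labE0 ?labE1 ?labE2 => // _.
- by exists 'X_2; rewrite mulrC.
- by exists 'X_2; rewrite mulrC.
- by exists 'X_1.
- by exists 'X_1.
Qed.

Lemma bb_M : M bb.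
Proof.
apply: ind_in_M; apply: (@forall_edges (fun a b l => _ -> _)); rewrite !inE !vtxE //= ?labE0 ?labE1 ?labE2 => // _.
- by exists 'X_2; rewrite mulrC.
- by exists 'X_2; rewrite mulrC.
- by exists 'X_0.
- by exists 'X_0.
Qed.

Lemma mab v : 'X_2 * mm v = 'X_0 * aa v + 'X_1 * bb v.
Proof.
rewrite !ffunE !inE; case: v => [[|[|[|[|[|[|?]]]]]] hv] //=;
  rewrite ?mulr0 ?addr0 ?add0r.
all: ring.
Qed.
End Part1a.

Section Part1b.
Variable R : comNzRingType.
Local Notation M := (@H_tilde R).
Local Notation FF := {ffun 'I_6 -> {mpoly R[3]}}.

Lemma M_add (f g : FF) : M f -> M g -> M (f + g).
Proof.
move=> hf hg e he; have [q hq] := hf e he; have [q' hq'] := hg e he.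
by exists (q + q'); rewrite !ffunE opprD addrACA hq hq' mulrDl.
Qed.

Lemma M_scale c (f : FF) : M f -> M (fscale c f).
Proof.
by move=> hf e he; have [q hq] := hf e he; exists (c * q); rewrite !ffunE -mulrBr hq mulrA.
Qed.

Lemma M_0 : M 0.
Proof. by move=> e he; exists 0; rewrite !ffunE subrr mul0r. Qed.

Lemma fscale0 (f : FF) : fscale 0 f = 0.
Proof. by apply/ffunP => v; rewrite !ffunE mul0r. Qed.

Lemma fscale0r c : fscale c (0 : FF) = 0.
Proof. by apply/ffunP => v; rewrite !ffunE mulr0. Qed.

Lemma fscaleDl c d (f : FF) : fscale (c + d) f = fscale c f + fscale d f.
Proof. by apply/ffunP => v; rewrite !ffunE mulrDl. Qed.

Lemma sum_ext (s t : seq FF) (c : FF -> {mpoly R[3]}) : uniq s -> {subset t <= s} ->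
  \sum_(b <- t) fscale (c b) b = \sum_(b <- s) fscale ((count_mem b t)%:R * c b) b.
Proof.
move=> us; elim: t => [|x t IH] sub.
  by rewrite big_nil big1 // => b _; rewrite /= mul0r fscale0.
have xs : x \in s by apply: sub; rewrite inE eqxx.
rewrite big_cons IH; last by move=> y yt; apply: sub; rewrite inE yt orbT.
rewrite [RHS](eq_bigr (fun b => fscale ((x == b)%:R * c b) b +
   fscale ((count_mem b t)%:R * c b) b)); last first.
  by move=> b _; rewrite /= natrD mulrDl fscaleDl.
rewrite big_split /=; congr (_ + _).
rewrite (big_rem x) //= eqxx mul1r big1_seq ?addr0 // => b /andP[_].
rewrite (mem_rem_uniq _ us) inE => /andP[/negbTE hb _].
by rewrite eq_sym hb mul0r fscale0.
Qed.

Definition lqz : 3.-tuple {mpoly R[3]} := [tuple 0; 0; 'X_2].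
Definition piz (p : {mpoly R[3]}) := p \mPo lqz.

Lemma piz_dec p : exists A B, p - piz p = 'X_0 * A + 'X_1 * B.
Proof.
elim/mpolyind: p => [|c m p _ _ [A [B hAB]]].
  by exists 0, 0; rewrite /piz comp_mpoly0 subrr !mulr0 addr0.
suff [A' [B' h]] : exists A' B', c *: 'X_[m] - piz (c *: 'X_[m]) = 'X_0 * A' + 'X_1 * B'.
  exists (A' + A), (B' + B); rewrite /piz comp_mpolyD -/(piz _) -/(piz _).
  rewrite opprD addrACA h hAB; ring.
have mono : forall i : 'I_3, (0 < m i)%N -> ('X_[m] : {mpoly R[3]}) = 'X_i * 'X_[m - U_(i)].
  move=> i hi; rewrite -mpolyXD addmC submK //; apply/mnm_lepP => j.
  by rewrite mnm1E; case: eqP => [<-|].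
have pX0 : piz 'X_0 = 0 by rewrite /piz comp_mpolyXU.
have pX1 : piz 'X_1 = 0 by rewrite /piz comp_mpolyXU.
case: (posnP (m 0)) => h0; last first.
  exists (c *: 'X_[m - U_(0)]), 0; rewrite (mono 0 h0) /piz comp_mpolyZ rmorphM /=.
  by rewrite -/(piz _) pX0 mul0r scaler0 subr0 mulr0 addr0 scalerAr.
case: (posnP (m 1)) => h1; last first.
  exists 0, (c *: 'X_[m - U_(1)]); rewrite (mono 1 h1) /piz comp_mpolyZ rmorphM /=.
  by rewrite -/(piz _) pX1 mul0r scaler0 subr0 mulr0 add0r scalerAr.
exists 0, 0; rewrite /piz comp_mpolyZ comp_mpolyX mpolyXE_id !mulr0 addr0.
suff -> : \prod_(i < 3) tnth lqz i ^+ m i = \prod_(i < 3) 'X_i ^+ m i by rewrite subrr.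
apply: eq_bigr => -[[|[|[|?]]] hi] _ //=.
all: first [ by rewrite (_ : Ordinal hi = 0) ?h0 ?expr0 //; apply: val_inj
  | by rewrite (_ : Ordinal hi = 1) ?h1 ?expr0 //; apply: val_inj
  | by rewrite (_ : Ordinal hi = 2) //; apply: val_inj ].
Qed.

Lemma piz_X2 p : piz ('X_2 * p) = 'X_2 * piz p.
Proof. by rewrite /piz rmorphM /= comp_mpolyXU. Qed.

Lemma piz_X0 p : piz ('X_0 * p) = 0.
Proof. by rewrite /piz rmorphM /= comp_mpolyXU mul0r. Qed.

Lemma piz_X1 p : piz ('X_1 * p) = 0.
Proof. by rewrite /piz rmorphM /= comp_mpolyXU mul0r. Qed.

Lemma X2_inj (p : {mpoly R[3]}) : 'X_2 * p = 0 -> p = 0.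
Proof.
move=> h; apply/mpolyP => k; have := congr1 (mcoeff (U_(2) + k)) h.
by rewrite mcoeff0 mulrC mcoeffMX => ->; rewrite mcoeff0.
Qed.


Lemma inXY (p a b : {mpoly R[3]}) : 'X_2 * p = 'X_0 * a + 'X_1 * b -> exists A B, p = 'X_0 * A + 'X_1 * B.
Proof.
move=> h; have := congr1 piz h; rewrite piz_X2 /piz rmorphD /= -!/(piz _) piz_X0 piz_X1 addr0.
move/X2_inj => hp; have [A [B hAB]] := piz_dec p.
by exists A, B; rewrite -hAB hp subr0.
Qed.

Lemma list_span (s : seq FF) (C : FF -> {mpoly R[3]}) :
  (forall b, b \in s -> M b /\ exists A B, C b = 'X_0 * A + 'X_1 * B) ->
  exists a' b', M a' /\ M b' /\
    \sum_(b <- s) fscale (C b) b = fscale 'X_0 a' + fscale 'X_1 b'.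
Proof.
elim: s => [|x s IH] h.
  by exists 0, 0; rewrite big_nil !fscale0r addr0; split; [exact: M_0|split; [exact: M_0|]].
have [Mx [A [B hx]]] := h x (mem_head _ _).
have [a' [b' [Ma [Mb E]]]] := IH (fun b hb => h b (mem_behead (s := x :: s) hb)).
exists (fscale A x + a'), (fscale B x + b'); split; first by apply: M_add => //; apply: M_scale.
split; first by apply: M_add => //; apply: M_scale.
rewrite big_cons E hx; apply/ffunP => v; rewrite !ffunE; ring.
Qed.

Definition D01 (p : {mpoly R[3]}) := lin 1 (mderiv 0 p).

Lemma D01E (a b : {mpoly R[3]}) : D01 ('X_0 * a + 'X_1 * b) = lin 1 a + lin 0 b.
Proof.
rewrite /D01 mderivD !mderivM !dX !linD !linM !linC !linX !ev0X !ev0C /=.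
by rewrite !mul0r !mul1r !add0r !addr0.
Qed.

End Part1b.

Section Part1c.
Variable R : comNzRingType.
Local Notation M := (@H_tilde R).
Local Notation FF := {ffun 'I_6 -> {mpoly R[3]}}.

Lemma sum_pt (s : seq FF) (C : FF -> {mpoly R[3]}) v :
  (\sum_(b <- s) fscale (C b) b) v = \sum_(b <- s) C b * b v.
Proof. by rewrite sum_ffunE; apply: eq_bigr => b _; rewrite ffunE. Qed.

Lemma not_free : ~ free_submodule M.
Proof.
move=> [Bs [HB [Hspan Hind]]].
have [s1 [c1 [Hs1 E1]]] := Hspan _ (mm_M R).
have [s2 [c2 [Hs2 E2]]] := Hspan _ (aa_M R).
have [s3 [c3 [Hs3 E3]]] := Hspan _ (bb_M R).
set s := undup (s1 ++ s2 ++ s3).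
have us : uniq s := undup_uniq _.
have sB : forall b, b \in s -> Bs b.
  move=> b; rewrite mem_undup !mem_cat => /or3P [] h; [exact: Hs1|exact: Hs2|exact: Hs3].
have sub1 : {subset s1 <= s} by move=> b hb; rewrite mem_undup !mem_cat hb.
have sub2 : {subset s2 <= s} by move=> b hb; rewrite mem_undup !mem_cat hb orbT.
have sub3 : {subset s3 <= s} by move=> b hb; rewrite mem_undup !mem_cat hb !orbT.
set Cm := fun b => (count_mem b s1)%:R * c1 b.
set Ca := fun b => (count_mem b s2)%:R * c2 b.
set Cb := fun b => (count_mem b s3)%:R * c3 b.
have Em : mm R = \sum_(b <- s) fscale (Cm b) b by rewrite E1 (sum_ext _ us sub1).
have Ea : aa R = \sum_(b <- s) fscale (Ca b) b by rewrite E2 (sum_ext _ us sub2).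
have Eb : bb R = \sum_(b <- s) fscale (Cb b) b by rewrite E3 (sum_ext _ us sub3).
have Ecoef : forall b, b \in s -> 'X_2 * Cm b = 'X_0 * Ca b + 'X_1 * Cb b.
  move=> b hb; apply/eqP; rewrite -subr_eq0; apply/eqP.
  apply: (Hind s (fun b => 'X_2 * Cm b - ('X_0 * Ca b + 'X_1 * Cb b))) => //.
  apply/ffunP => v; rewrite sum_pt ffunE.
  have := mab R v; rewrite Em Ea Eb !sum_pt !mulr_sumr => /eqP; rewrite -subr_eq0.
  rewrite -big_split /= -sumrB => /eqP H; rewrite -[RHS]H; apply: eq_bigr => c _; ring.
have HC : forall b, b \in s -> M b /\ exists A B, Cm b = 'X_0 * A + 'X_1 * B.
  move=> b hb; split; first exact/HB/sB.
  exact: (inXY (Ecoef b hb)).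
have [a' [b' [Ma [Mb Eab]]]] := list_span HC.
have Ev : forall v, D01 (mm R v) = lin 1 (a' v) + lin 0 (b' v).
  by move=> v; rewrite Em Eab !ffunE D01E.
have h1 := Ev (vtx 1); have h5 := Ev (vtx 5).
rewrite (lin_const Ma _ (vtx 5)) (lin_const Mb _ (vtx 5)) in h5; rewrite -h5 in h1.
move: h1; rewrite !ffunE !inE !vtxE //=.
rewrite /D01 mderiv0 lin0 -/(D01 _).
have : D01 ('X_0 * 'X_1 + 'X_1 * 0 : {mpoly R[3]}) = 1 by rewrite D01E linX lin0 eqxx addr0.
rewrite mulr0 addr0 => ->; apply/eqP; exact: oner_neq0.
Qed.
End Part1c.

Theorem proposition5p1 (P : 'M[int]_(2,3)) (phi : 'I_6 -> {perm 'I_3}) :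
  epi P -> extends P phi ->
  conclusion int P phi /\ conclusion rat P phi.
Proof.
move=> _ [bij _]; split; split.
- exact: not_free.
- exact: not_surj.
- exact: not_free.
- exact: not_surj.
Qed.
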